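(* Let $(V,\mathcal{G},\mathcal{B})$ be a $(v,g,k,\lambda)_q$-GDD with $2\le g\le k$. Then $q^{k-g}$ divides $\lambda$.
   Context: Let $q$ be a prime power and $v,g,k,\lambda$ positive integers. A $(v,g,k,\lambda)_q$-GDD ($q$-analog of a group divisible design) is a triple $(V,\mathcal{G},\mathcal{B})$ where $V$ is a $v$-dimensional vector space over $\mathrm{GF}(q)$; $\mathcal{G}$ is a set of $g$-dimensional subspaces of $V$ (groups) such that every $1$-dimensional subspace of $V$ lies in exactly one element of $\mathcal{G}$, and $\#\mathcal{G}>1$; $\mathcal{B}$ is a set of $k$-dimensional subspaces of $V$ (blocks); and every $2$-dimensional subspace of $V$ is either contained in exactly one element of $\mathcal{G}$ and in no block, or contained in no element of $\mathcal{G}$ and in exactly $\lambda$ blocks. *)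

(* Defs.v *)
From HB Require Import structures.
From mathcomp Require Import all_boot all_order all_algebra all_field.
From mathcomp Require Import finmap.
Set Implicit Arguments. Unset Strict Implicit. Unset Printing Implicit Defensive.
Local Open Scope fset_scope.

(* V = 'rV[F]_v, the v-dimensional vector space over the finite field F
   (so q = #|F|); subspaces are MathComp's {vspace 'rV[F]_v}.
   Groups G and blocks B are finite sets of subspaces. *)
Definition is_qGDD (F : finFieldType) (v g k lam : nat)
    (G B : {fset {vspace 'rV[F]_v}}) : Prop :=
  [/\ (forall U, U \in G -> \dim U = g),
      (forall P : {vspace 'rV[F]_v}, \dim P = 1 ->
         #|` [fset U in G | (P <= U)%VS]| = 1),
      1 < #|` G|,
      (forall U, U \in B -> \dim U = k) &
      (forall L : {vspace 'rV[F]_v}, \dim L = 2 ->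
         (#|` [fset U in G | (L <= U)%VS]| = 1 /\
          #|` [fset U in B | (L <= U)%VS]| = 0)
         \/
         (#|` [fset U in G | (L <= U)%VS]| = 0 /\
          #|` [fset U in B | (L <= U)%VS]| = lam))].
Arguments is_qGDD {F} v g k lam G B.

(* Main.v *)
From HB Require Import structures.
From mathcomp Require Import all_boot all_order all_algebra all_field.
From mathcomp Require Import finmap.
From mathcomp Require Import ring zify.
Require Import Defs.
Import GRing.Theory.
Set Implicit Arguments. Unset Strict Implicit. Unset Printing Implicit Defensive.

Lemma dim_line2 (K : fieldType) (vT : vectType K) (P : {vspace vT}) x :
  \dim P = 1 -> x \notin P -> \dim (P + <[x]>) = 2.
Proof.
move=> dP xP.
have x0 : x != 0%R by apply: contraNneq xP => ->; exact: mem0v.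
have := dimv_sum_cap P <[x]>; rewrite dP dim_vline x0.
suff -> : \dim (P :&: <[x]>) = 0 by rewrite addn0.
have : \dim (P :&: <[x]>) <= 1 by rewrite -[1](_ : \dim <[x]> = 1) ?dimvS ?capvSr // dim_vline x0.
case: (\dim (P :&: <[x]>)) (eqEdim (P :&: <[x]>) <[x]>) => [|[|//]] // E _.
move: E; rewrite capvSr dim_vline x0 /= => /eqP E.
by move: xP; rewrite memvE -E capvSl.
Qed.

Lemma dim_hyper (K : fieldType) (vT : vectType K) (H U : {vspace vT}) :
  0 < dim vT -> \dim H = (dim vT).-1 -> ~~ (U <= H)%VS ->
  (\dim (U :&: H)).+1 = \dim U.
Proof.
move=> v0 dH UH.
have := dimv_sum_cap U H.
suff -> : \dim (U + H) = dim vT by rewrite dH; lia.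
have le1 : \dim (U + H) <= dim vT by rewrite -dimvf dimvS ?subvf.
have le2 : \dim H <= \dim (U + H) by rewrite dimvS ?addvSr.
have [//|ne] := eqVneq (\dim (U + H)) (dim vT).
have E : \dim (U + H) <= \dim H by lia.
have := eqEdim H (U + H); rewrite addvSr E => /eqP EH.
by move: UH; rewrite EH addvSl.
Qed.

Lemma cardf_sep (T : choiceType) (A : {fset T}) (p : pred T) :
  #|` [fset U in A | p U]%fset| = \sum_(U <- A) p U.
Proof.
rewrite card_fset_sum1 -big_fset_condE big_mkcond /=.
by apply: eq_bigr => i _; case: (p i).
Qed.

Lemma sum_memv (F : finFieldType) (v : nat) (U : {vspace 'rV[F]_v}) :
  \sum_(x : 'rV[F]_v) (x \in U : nat) = #|F| ^ \dim U.
Proof.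
rewrite -card_vspace -sum1_card [RHS]big_mkcond /=.
by apply: eq_bigr => i _; case: (i \in U).
Qed.

Lemma pointwise (F : finFieldType) v g k lam (G B : {fset {vspace 'rV[F]_v}})
    (P W H : {vspace 'rV[F]_v}) (x : 'rV[F]_v) :
  is_qGDD v g k lam G B -> \dim P = 1 -> W \in G -> (P <= W)%VS -> (P <= H)%VS ->
  (x \in H) * (\sum_(U <- B | (P <= U)%VS) (x \in U : nat)) + lam * (x \in (W :&: H)%VS)
  = (\sum_(U <- B | (P <= U)%VS) 1) * (x \in P) + lam * (x \in H).
Proof.
move=> [hG hP hcard hB hL] dP WG PW PH.
case xP: (x \in P).
  have xW := subvP PW x xP; have xH := subvP PH x xP.
  rewrite memv_cap xW xH /= !muln1 mul1n.
  congr (_ + _); apply: eq_bigr => U PU; by rewrite (subvP PU x xP).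
set L := (P + <[x]>)%VS.
have dL : \dim L = 2 by apply: dim_line2 => //; rewrite xP.
have cE : \sum_(U <- B | (P <= U)%VS) (x \in U : nat) = #|` [fset U in B | (L <= U)%VS]%fset|.
  rewrite cardf_sep big_mkcond; apply: eq_bigr => U _.
  by rewrite subv_add -memvE; case: (P <= U)%VS.
rewrite cE memv_cap muln0 add0n.
case xW: (x \in W).
  have WL : W \in [fset U in G | (L <= U)%VS]%fset.
    by rewrite !inE /= WG subv_add PW -memvE xW.
  case: (hL L dL) => [[_ ->]|[h0 _]].
    by rewrite muln0 add0n.
  by move: WL; rewrite (cardfs0_eq h0) inE.
case: (hL L dL) => [[h1 _]|[_ ->]]; last by case: (x \in H); rewrite /= ?muln0 ?mul0n ?muln1 ?mul1n ?addn0 ?add0n.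
exfalso.
have /cardfs1P [y Ey] : #|` [fset U in G | (L <= U)%VS]%fset| == 1 by rewrite h1.
have : y \in [fset U in G | (L <= U)%VS]%fset by rewrite Ey inE.
rewrite !inE /= => /andP [yG Ly].
have /cardfs1P [z Ez] : #|` [fset U in G | (P <= U)%VS]%fset| == 1 by rewrite hP.
have : y \in [fset U in G | (P <= U)%VS]%fset.
  by rewrite !inE /= yG; move: Ly; rewrite subv_add => /andP [].
have : W \in [fset U in G | (P <= U)%VS]%fset by rewrite !inE /= WG PW.
rewrite Ez !inE => /eqP Wz /eqP yz.
by move: Ly; rewrite yz -Wz subv_add -memvE xW andbF.
Qed.

Lemma count_H (F : finFieldType) v g k lam (G B : {fset {vspace 'rV[F]_v}})
    (P W H : {vspace 'rV[F]_v}) :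
  is_qGDD v g k lam G B -> \dim P = 1 -> W \in G -> (P <= W)%VS -> (P <= H)%VS ->
  \sum_(U <- B | (P <= U)%VS) #|F| ^ \dim (U :&: H) + lam * #|F| ^ \dim (W :&: H)
  = #|F| * (\sum_(U <- B | (P <= U)%VS) 1) + lam * #|F| ^ \dim H.
Proof.
move=> gdd dP WG PW PH.
have : \sum_(x : 'rV[F]_v) ((x \in H) * (\sum_(U <- B | (P <= U)%VS) (x \in U : nat)) + lam * (x \in (W :&: H)%VS))
  = \sum_(x : 'rV[F]_v) ((\sum_(U <- B | (P <= U)%VS) 1) * (x \in P) + lam * (x \in H)).
  by apply: eq_bigr => x _; exact: pointwise gdd dP WG PW PH.
rewrite !big_split /= -!big_distrr /= !sum_memv dP expn1 => E.
rewrite [#|F| * _]mulnC -E; congr (_ + _).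
rewrite (eq_bigr (fun x => \sum_(U <- B | (P <= U)%VS) ((x \in U) && (x \in H) : nat))); last first.
  move=> x _; rewrite big_distrr /=; apply: eq_bigr => U _.
  by case: (x \in H); case: (x \in U).
rewrite exchange_big /=; apply: eq_bigr => U _.
rewrite -sum_memv; apply: eq_bigr => x _; by rewrite memv_cap.
Qed.

Lemma arith q c d lam k1 g1 v1 : 1 < q -> g1 <= k1 -> g1 < v1 ->
 (c+d)*q^(k1.+1) + lam*q^(g1.+1) = q*(c+d) + lam*q^(v1.+1) ->
 c*q^(k1.+1) + d*q^k1 + lam*q^g1 = q*(c+d) + lam*q^v1 ->
 q^(k1 - g1) %| lam.
Proof.
move=> q1 gk gv E1 E2.
set T := q ^ (k1 - g1); set M := q ^ (v1 - g1); set Gp := q ^ g1.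
have hA : q ^ k1 = T * Gp by rewrite -expnD subnK.
have hV : q ^ v1 = M * Gp by rewrite -expnD subnK // ltnW.
have M1 : 0 < M by rewrite expn_gt0; lia.
have T1 : 0 < T by rewrite expn_gt0; lia.
have G1 : 0 < Gp by rewrite expn_gt0; lia.
have [A hAe] : exists A, A = T * Gp by eexists.
have [A' hA'] : exists A', A = A'.+1 by exists A.-1; rewrite hAe; lia.
have [M' hM'] : exists M', M = M'.+1 by exists M.-1; lia.
have NE : c * A * A' = lam * Gp * M'.
  move: E1 E2; rewrite !expnS hA hV -hAe hA' hM'.
  move=> /(congr1 Posz) E1 /(congr1 Posz) E2.
  rewrite !(PoszD, PoszM, intS) in E1 E2.
  set cz := (Posz c) in E1 E2 *; set dz := (Posz d) in E1 E2 *; set qz := (Posz q) in E1 E2 *.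
  set Az := (Posz A') in E1 E2 *; set Mz := (Posz M') in E1 E2 *; set lz := (Posz lam) in E1 E2 *.
  set Gz := (Posz Gp) in E1 E2 *.
  have key : ((cz * (1 + Az) - (cz + dz)) * (qz * (qz - 1)) =
     qz * ((cz * (qz * (1 + Az)) + dz * (1 + Az) + lz * Gz) - (qz * (cz + dz) + lz * ((1 + Mz) * Gz)))
     - (((cz + dz) * (qz * (1 + Az)) + lz * (qz * Gz)) - (qz * (cz + dz) + lz * (qz * ((1 + Mz) * Gz)))))%R.
    by ring.
  rewrite E1 E2 !subrr mulr0 subrr in key.
  have qz0 : (qz * (qz - 1) != 0)%R.
    by rewrite mulf_eq0 negb_or subr_eq0 /qz !eqz_nat; apply/andP; split; lia.
  have cA : (cz * (1 + Az) - (cz + dz) = 0)%R.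
    by move: key => /eqP; rewrite mulf_eq0 (negPf qz0) orbF => /eqP.
  have key2 : (qz * (cz * (1 + Az) * Az - lz * Gz * Mz) =
     (((cz + dz) * (qz * (1 + Az)) + lz * (qz * Gz)) - (qz * (cz + dz) + lz * (qz * ((1 + Mz) * Gz))))
     + (cz * (1 + Az) - (cz + dz)) * (qz * (1 + Az) - qz))%R.
    by ring.
  rewrite E1 subrr cA mul0r addr0 in key2.
  move/eqP: key2; rewrite mulf_eq0 /qz eqz_nat (_ : (q == 0) = false); last by lia.
  rewrite /= subr_eq0 => /eqP.
  rewrite /cz /Az /lz /Gz /Mz -intS -!PoszM => /eqP; rewrite eqz_nat => /eqP.
  done.
have : T %| lam * M'.
  by rewrite -(@dvdn_pmul2r Gp) // -hAe mulnAC -NE mulnAC dvdn_mull.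
rewrite Gauss_dvdl //.
have -> : T = q ^ (k1 - g1) by [].
apply: coprimeXl.
apply: (@coprime_dvdl _ M); first by rewrite dvdn_exp // ?subn_gt0.
by rewrite hM' coprimeSn.
Qed.

Theorem lemma7 (F : finFieldType) (v g k lam : nat)
    (G B : {fset {vspace 'rV[F]_v}}) :
  0 < v -> 0 < g -> 0 < k -> 0 < lam ->
  is_qGDD v g k lam G B ->
  2 <= g <= k ->
  #|F| ^ (k - g) %| lam.
Proof.
move=> v0 g0 k0 l0 gdd /andP [g2 gk].
have gdd' := gdd; case: gdd' => [hG hP hcard hB hL].
have q1 : 1 < #|F| := finNzRing_gt1 F.
have dVT : dim 'rV[F]_v = v by rewrite /dim /= mul1n.
have dV : \dim (fullv : {vspace 'rV[F]_v}) = v by rewrite dimvf dVT.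
have vg : g < v.
  rewrite ltnNge; apply/negP => vg.
  have GS : (G `<=` [fset fullv])%fset.
    apply/fsubsetP => U UG; rewrite inE eqEdim subvf dV hG //.
  by move: (fsubset_leq_card GS); rewrite cardfs1; lia.
set x0 := vpick (fullv : {vspace 'rV[F]_v}).
have x00 : x0 != 0%R by rewrite vpick0 -dimv_eq0 dV; lia.
set P := <[x0]>%VS.
have dP : \dim P = 1 by rewrite dim_vline x00.
have /cardfs1P [W EW] : #|` [fset U in G | (P <= U)%VS]%fset| == 1 by rewrite hP.
have : W \in [fset U in G | (P <= U)%VS]%fset by rewrite EW inE.
rewrite !inE /= => /andP [WG PW].
have [w /andP [wW wP]] : exists w, (w \in W) && (w \notin P).
  apply/existsP; apply: contraTT (g2) => /existsPn h.
  have WP : (W <= P)%VS.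
    by apply/subvP => y yW; have := h y; rewrite yW /= negbK.
  by have := dimvS WP; rewrite dP hG //; lia.
set S := (P + <[w]>)%VS.
have dS : \dim S = 2 by apply: dim_line2.
set H := (P + S^C)%VS.
have PH : (P <= H)%VS by rewrite addvSl.
have dH : \dim H = (dim 'rV[F]_v).-1.
  have := dimv_sum_cap P S^C.
  have -> : \dim (P :&: S^C) = 0.
    have := dimvS (capvS (addvSl P <[w]>) (subvv S^C)).
    by rewrite capv_compl dimv0; lia.
  by rewrite dimv_compl dS dP dimvf dVT -/H; lia.
have wH : w \notin H.
  apply/negP => /memv_addP [p pP [c cC wE]].
  have cS : c \in S.
    have -> : c = (w - p)%R by rewrite wE addrC addKr.
    rewrite rpredB //; first by rewrite (subvP (addvSr P <[w]>)) // memv_line.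
    by rewrite (subvP (addvSl P <[w]>)).
  have : c \in (S :&: S^C)%VS by rewrite memv_cap cS cC.
  rewrite capv_compl memv0 => /eqP c0.
  by move: wP; rewrite wE c0 addr0 pP.
have WH : ~~ (W <= H)%VS by apply: contra wH => /subvP; apply.
have vpos : 0 < dim 'rV[F]_v by rewrite dVT.
have dWH := dim_hyper vpos dH WH.
have E1 := count_H gdd dP WG PW (subvf P).
have E2 := count_H gdd dP WG PW PH.
rewrite (capv_idPl (subvf W)) hG // dV in E1.
rewrite (hG W WG) in dWH.
set c := \sum_(U <- B | (P <= U)%VS && (U <= H)%VS) 1.
set d := \sum_(U <- B | (P <= U)%VS && ~~ (U <= H)%VS) 1.
have eb : \sum_(U <- B | (P <= U)%VS) 1 = c + d by rewrite (bigID (fun U => (U <= H)%VS)).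
have s1 : \sum_(U <- B | (P <= U)%VS) #|F| ^ \dim (U :&: fullv) = (c + d) * #|F| ^ k.
  rewrite -eb big_distrl /= big_seq_cond [RHS]big_seq_cond; apply: eq_bigr => U /andP [UB _].
  by rewrite (capv_idPl (subvf U)) hB //; apply/esym/mul1n.
have s2 : \sum_(U <- B | (P <= U)%VS) #|F| ^ \dim (U :&: H) = c * #|F| ^ k + d * #|F| ^ k.-1.
  rewrite (bigID (fun U => (U <= H)%VS)) /=; congr (_ + _);
    rewrite big_distrl big_seq_cond [RHS]big_seq_cond; apply: eq_bigr => U /andP [UB /andP [_ UH]].
    by rewrite (capv_idPl UH) hB //; apply/esym/mul1n.
  by have := dim_hyper vpos dH UH; rewrite (hB U UB) => E; rewrite -E /=; apply/esym/mul1n.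
rewrite s1 eb in E1.
rewrite s2 eb dH dVT in E2.
have [g1 eg] : exists g1, g = g1.+1 by exists g.-1; lia.
have [k1 ek] : exists k1, k = k1.+1 by exists k.-1; lia.
have [v1 ev] : exists v1, v = v1.+1 by exists v.-1; lia.
rewrite eg in dWH; case: dWH => dWH.
rewrite eg ek ev in E1; rewrite dWH ek ev /= in E2.
rewrite eg ek subSS; apply: (arith q1 _ _ E1 E2); lia.
Qed.
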